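(* The category $\mathbf{bPos}$ has finite products (the product of $A$ and $B$ is the set $A\times B$ with $(a_1,b_1)\cdots(a_n,b_n)\le(a,b)$ iff $a_1\cdots a_n\le a$ in $A$ and $b_1\cdots b_n\le b$ in $B$; the terminal object is a singleton $\{*\}$ with $*\cdots *\le *$ ($n$ factors) for every $n\ge0$), but this cartesian monoidal structure is not closed: there is a broad poset $C$ (e.g. the $3$-corolla $\gamma_3$) such that the functor $C\times - :\mathbf{bPos}\to\mathbf{bPos}$ does not preserve pushouts, hence has no right adjoint. This holds in both the commutative and the non-commutative setting.
   Context: For a set $A$, $A^{\cdot}$ is the free monoid on $A$ and $A^{+}$ the free commutative monoid on $A$ (unit $\epsilon$); $A^*$ denotes one of them consistently (non-commutative resp. commutative setting). A broad poset is a set $A$ with $R\subseteq A^*\times A$ (written $b\le a$) satisfying: reflexivity $a\le a$; transitivity: $a_1\cdots a_n\le a$ and $b_i\le a_i$ ($b_i\in A^*$, $n\ge0$) imply $b_1\cdots b_n\le a$; antisymmetry for elements of $A$. Monotone maps $f$ satisfy $b\le a\Rightarrow f(b)\le f(a)$ with $f$ extended multiplicatively; $\mathbf{bPos}$ is the resulting category. $\star$ denotes the singleton broad poset $\{*\}$ whose only relation is $*\le *$. For $n\ge0$, the $n$-corolla $\gamma_n$ is the set $\{r,l_1,\dots,l_n\}$ whose only relations besides reflexivity are $l_1\cdots l_n\le r$. A witnessing pushout: $\gamma_2\leftarrow\star\rightarrow\gamma_2$, where one map picks $r$ and the other picks $l_1$. *)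

(* Defs.v *)
From Stdlib Require Import List Permutation.
Import ListNotations.

Record bstr := BStr { car :> Type; brel : list car -> car -> Prop }.
Arguments brel {_} _ _.

(* Broad-poset axioms. comm = true: commutative setting (A^* = A^+, free
   commutative monoid), encoded as lists with a permutation-invariant relation;
   comm = false: non-commutative setting (A^* = free monoid = lists). *)
Definition is_bposet (comm : bool) (A : bstr) : Prop :=
  (forall a : A, brel [a] a) /\
  (forall (as_ : list A) (a : A) (bs : list (list A)),
      brel as_ a -> Forall2 (fun b ai => brel b ai) bs as_ -> brel (concat bs) a) /\
  (forall a b : A, brel [a] b -> brel [b] a -> a = b) /\
  (comm = true -> forall (l l' : list A) (a : A), Permutation l l' -> brel l a -> brel l' a).

Record bposet (comm : bool) := BPos { bp :> bstr; bp_ax : is_bposet comm bp }.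

Definition monotone {A B : bstr} (f : A -> B) : Prop :=
  forall (l : list A) (a : A), brel l a -> brel (map f l) (f a).

Definition prod_bstr (A B : bstr) : bstr :=
  BStr (A * B) (fun l p => brel (map fst l) (fst p) /\ brel (map snd l) (snd p)).

Definition term_bstr : bstr := BStr unit (fun _ _ => True).

(* The n-corolla gamma_n: carrier option (Fin.t n); None = root r,
   Some i = leaf l_{i+1}. Only relations: reflexivity and l_1...l_n <= r
   (up to permutation in the commutative setting). *)
Fixpoint fin_enum (n : nat) : list (Fin.t n) :=
  match n with
  | 0 => []
  | S m => Fin.F1 :: map Fin.FS (fin_enum m)
  end.

Definition corolla_leaves (n : nat) : list (option (Fin.t n)) :=
  map Some (fin_enum n).

Definition corolla (comm : bool) (n : nat) : bstr :=
  BStr (option (Fin.t n))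
       (fun l x => l = [x] \/
                   (x = None /\ (if comm then Permutation l (corolla_leaves n)
                                 else l = corolla_leaves n))).

Definition is_product_in_bPos (comm : bool) (A B : bposet comm) : Prop :=
  is_bposet comm (prod_bstr A B) /\
  @monotone (prod_bstr A B) A fst /\ @monotone (prod_bstr A B) B snd /\
  forall (X : bposet comm) (f : X -> A) (g : X -> B),
    monotone f -> monotone g ->
    exists h : X -> prod_bstr A B,
      monotone h /\ (forall x, fst (h x) = f x) /\ (forall x, snd (h x) = g x) /\
      forall h' : X -> prod_bstr A B,
        monotone h' -> (forall x, fst (h' x) = f x) -> (forall x, snd (h' x) = g x) ->
        forall x, h' x = h x.

Definition is_terminal_in_bPos (comm : bool) : Prop :=
  is_bposet comm term_bstr /\
  forall X : bposet comm,
    exists h : X -> term_bstr, monotone h /\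
      forall h' : X -> term_bstr, monotone h' -> forall x, h' x = h x.

Definition is_pushout (comm : bool) (X Y Z P : bstr)
    (f : X -> Y) (g : X -> Z) (i : Y -> P) (j : Z -> P) : Prop :=
  monotone f /\ monotone g /\ monotone i /\ monotone j /\
  (forall x, i (f x) = j (g x)) /\
  forall (Q : bposet comm) (u : Y -> Q) (v : Z -> Q),
    monotone u -> monotone v -> (forall x, u (f x) = v (g x)) ->
    exists h : P -> Q,
      monotone h /\ (forall y, h (i y) = u y) /\ (forall z, h (j z) = v z) /\
      forall h' : P -> Q,
        monotone h' -> (forall y, h' (i y) = u y) -> (forall z, h' (j z) = v z) ->
        forall p, h' p = h p.

Definition prod_map {C A B : Type} (f : A -> B) : C * A -> C * B :=
  fun p => (fst p, f (snd p)).

(* The functor C x - : bPos -> bPos has a right adjoint, expressed by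
   couniversal arrows: for every Q an object G Q and a monotone
   ev_Q : C x G Q -> Q such that every monotone f : C x X -> Q factors as
   ev_Q o (C x g) for a unique monotone g : X -> G Q. *)
Definition has_right_adjoint (comm : bool) (C : bstr) : Prop :=
  exists (G : bposet comm -> bposet comm)
         (ev : forall Q : bposet comm, prod_bstr C (G Q) -> Q),
    (forall Q, monotone (ev Q)) /\
    forall (X Q : bposet comm) (f : prod_bstr C X -> Q),
      monotone f ->
      exists g : X -> G Q,
        monotone g /\ (forall c x, ev Q (c, g x) = f (c, x)) /\
        forall g' : X -> G Q,
          monotone g' -> (forall c x, ev Q (c, g' x) = f (c, x)) ->
          forall x, g' x = g x.

(* Main.v *)
Require Import Defs.
From Stdlib Require Import List Permutation.
Import ListNotations.

Notation Rc comm l L := (if comm then Permutation l L else l = L).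

Lemma Rc_refl (comm : bool) {T} (l : list T) : Rc comm l l.
Proof. destruct comm; [apply Permutation_refl | reflexivity]. Qed.

Lemma Rc_length (comm : bool) {T} (l L : list T) : Rc comm l L -> length l = length L.
Proof. destruct comm; [apply Permutation_length | intros ->; reflexivity]. Qed.

Lemma Rc_map (comm : bool) {T U} (f : T -> U) (l L : list T) :
  Rc comm l L -> Rc comm (map f l) (map f L).
Proof. destruct comm; [apply Permutation_map | intros ->; reflexivity]. Qed.

Lemma Rc_in (comm : bool) {T} (l L : list T) x : Rc comm l L -> In x l -> In x L.
Proof. destruct comm; [intros H; apply Permutation_in, H | intros ->; auto]. Qed.

Lemma Rc_tr comm (Q : bposet comm) (l l' : list Q) a :
  Rc comm l l' -> brel l' a -> brel l a.
Proof.
  destruct (bp_ax _ Q) as [_ [_ [_ Hp]]].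
  destruct comm; intros H1 H2.
  - eapply Hp; [reflexivity| apply Permutation_sym, H1 | exact H2].
  - subst; exact H2.
Qed.

Lemma concat_min {A : bstr} (bs : list (list A)) as_ :
  Forall2 (fun b a => brel b a) bs as_ ->
  (forall a, In a as_ -> forall b, brel b a -> b = [a]) -> concat bs = as_.
Proof.
  induction 1 as [|b a bs as_ Hb HF IH]; intros Hm; [reflexivity|].
  simpl. rewrite (Hm a (or_introl eq_refl) b Hb). simpl. f_equal.
  apply IH. intros x Hx. apply Hm. right; exact Hx.
Qed.

Lemma concat_single {A : bstr} (bs : list (list A)) a :
  Forall2 (fun b a => brel b a) bs [a] -> exists b, concat bs = b /\ brel b a.
Proof.
  intros HF. inversion HF as [|b a' bs' l' Hb Hnil]; subst.
  inversion Hnil; subst. exists b. simpl. rewrite app_nil_r. auto.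
Qed.

Lemma corolla_bp comm n : is_bposet comm (corolla comm n).
Proof.
  split; [|split; [|split]].
  - intros a; left; reflexivity.
  - intros as_ a bs H HF. destruct H as [->|[-> Hr]].
    + destruct (concat_single _ _ HF) as [b [-> Hb]]; exact Hb.
    + rewrite (concat_min _ _ HF). right; split; auto.
      intros x Hx b Hb. destruct Hb as [Hb|[Hn _]]; auto.
      subst x. exfalso. pose proof (Rc_in comm _ _ _ Hr Hx) as Hin.
      unfold corolla_leaves in Hin. apply in_map_iff in Hin.
      destruct Hin as [y [Hy _]]; discriminate.
  - intros a b H1 H2. destruct H1 as [H1|[Hb _]].
    + injection H1; auto.
    + destruct H2 as [H2|[Ha _]]; [injection H2; auto|]. subst; reflexivity.
  - intros Hc l l' a Hp H. subst comm. destruct H as [->|[-> Hr]].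
    + left. apply Permutation_length_1_inv, Hp.
    + right; split; auto. eapply Permutation_trans; [apply Permutation_sym, Hp|exact Hr].
Qed.

Definition disc (T : Type) : bstr := BStr T (fun l x => l = [x]).

Lemma disc_bp comm T : is_bposet comm (disc T).
Proof.
  split; [|split; [|split]].
  - intros a; reflexivity.
  - intros as_ a bs H HF. simpl in H. subst.
    destruct (concat_single _ _ HF) as [b [-> Hb]]; exact Hb.
  - intros a b H _. simpl in H. injection H; auto.
  - intros _ l l' a Hp H. simpl in *. subst. apply Permutation_length_1_inv, Hp.
Qed.

Lemma mono_disc comm T (B : bposet comm) (h : T -> B) : @monotone (disc T) B h.
Proof.
  intros l a H. simpl in H. subst. simpl. apply (bp_ax _ B).
Qed.

Lemma prod_bp comm (A B : bposet comm) : is_bposet comm (prod_bstr A B).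
Proof.
  destruct (bp_ax _ A) as [rA [tA [aA pA]]].
  destruct (bp_ax _ B) as [rB [tB [aB pB]]].
  split; [|split; [|split]].
  - intros a; split; simpl; [apply rA|apply rB].
  - intros as_ a bs [H1 H2] HF. split; simpl; rewrite concat_map.
    + apply (tA _ _ _ H1). clear -HF. induction HF as [|b a bs as_ Hb HF IH];
      simpl; constructor; [apply Hb|exact IH].
    + apply (tB _ _ _ H2). clear -HF. induction HF as [|b a bs as_ Hb HF IH];
      simpl; constructor; [apply Hb|exact IH].
  - intros [a1 b1] [a2 b2] [H1 H2] [H3 H4]. simpl in *.
    f_equal; [apply aA|apply aB]; assumption.
  - intros Hc l l' a Hp [H1 H2]. split.
    + eapply pA; [exact Hc| apply Permutation_map, Hp| exact H1].
    + eapply pB; [exact Hc| apply Permutation_map, Hp| exact H2].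
Qed.

Lemma prod_univ comm (A B : bposet comm) : is_product_in_bPos comm A B.
Proof.
  split; [apply prod_bp|]. split; [intros l a [H _]; exact H|].
  split; [intros l a [_ H]; exact H|].
  intros X f g Hf Hg. exists (fun x => (f x, g x)). split; [|split; [|split]].
  - intros l a H. split; simpl; rewrite map_map; [apply Hf|apply Hg]; exact H.
  - reflexivity.
  - reflexivity.
  - intros h' _ H1 H2 x. rewrite <- (H1 x), <- (H2 x). destruct (h' x); reflexivity.
Qed.

Lemma term_ok comm : is_terminal_in_bPos comm.
Proof.
  assert (Hb : is_bposet comm term_bstr).
  { split; [|split; [|split]]; simpl; auto. intros [] [] _ _; reflexivity. }
  split; [exact Hb|]. intros X. exists (fun _ => tt). split.
  - intros l a _. exact I.
  - intros h' _ x. destruct (h' x); reflexivity.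
Qed.
Lemma mono_comp {A B D : bstr} (f : A -> B) (g : B -> D) :
  monotone f -> monotone g -> monotone (fun x => g (f x)).
Proof. intros Hf Hg l a H. rewrite <- map_map. apply Hg, Hf, H. Qed.

Lemma mono_prod_map {C A B : bstr} (f : A -> B) :
  monotone f -> @monotone (prod_bstr C A) (prod_bstr C B) (prod_map f).
Proof.
  intros Hf l p [H1 H2]. split.
  - assert (E : map fst (map (prod_map f) l) = map fst l) by (rewrite map_map; reflexivity).
    simpl. rewrite E. exact H1.
  - assert (E : map snd (map (prod_map f) l) = map f (map snd l))
      by (rewrite !map_map; reflexivity).
    simpl. rewrite E. apply Hf, H2.
Qed.

Lemma adj_pushout comm (C : bstr) (X Y Z P : bposet comm) f g i j :
  has_right_adjoint comm C -> is_pushout comm X Y Z P f g i j ->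
  is_pushout comm (prod_bstr C X) (prod_bstr C Y) (prod_bstr C Z) (prod_bstr C P)
    (prod_map f) (prod_map g) (prod_map i) (prod_map j).
Proof.
  intros [G [ev [Hev Had]]] [Hf [Hg [Hi [Hj [Hc Hpo]]]]].
  split; [apply mono_prod_map; exact Hf|].
  split; [apply mono_prod_map; exact Hg|].
  split; [apply mono_prod_map; exact Hi|].
  split; [apply mono_prod_map; exact Hj|].
  split; [intros [c x]; unfold prod_map; simpl; rewrite Hc; reflexivity|].
  intros Q u v Hu Hv Huv.
  destruct (Had Y Q u Hu) as [gu [Hgu [Egu Ugu]]].
  destruct (Had Z Q v Hv) as [gv [Hgv [Egv Ugv]]].
  assert (Hfg : forall x, gu (f x) = gv (g x)).
  { destruct (Had X Q (fun p => u (prod_map f p))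
                (mono_comp _ _ (mono_prod_map _ Hf) Hu)) as [g0 [_ [_ U0]]].
    intro x.
    assert (M1 : monotone (fun x => gu (f x))) by (apply mono_comp; auto).
    assert (M2 : monotone (fun x => gv (g x))) by (apply mono_comp; auto).
    assert (E1 : forall c x, ev Q (c, gu (f x)) = u (prod_map f (c, x))).
    { intros c x'. rewrite Egu. reflexivity. }
    assert (E2 : forall c x, ev Q (c, gv (g x)) = u (prod_map f (c, x))).
    { intros c x'. rewrite Egv. rewrite (Huv (c, x')). reflexivity. }
    rewrite (U0 (fun x => gu (f x)) M1 E1 x), (U0 (fun x => gv (g x)) M2 E2 x).
    reflexivity. }
  destruct (Hpo (G Q) gu gv Hgu Hgv Hfg) as [hP [HhP [Ei [Ej Uh]]]].
  exists (fun p => ev Q (prod_map hP p)).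
  split; [apply (@mono_comp (prod_bstr C P) (prod_bstr C (G Q)) Q (prod_map hP) (ev Q));
          [apply mono_prod_map; exact HhP| apply Hev]|].
  split; [intros [c y]; unfold prod_map; simpl; rewrite Ei; apply Egu|].
  split; [intros [c z]; unfold prod_map; simpl; rewrite Ej; apply Egv|].
  intros h' Hh' E1 E2 [c p].
  destruct (Had P Q h' Hh') as [g' [Hg' [Eg' _]]].
  assert (Hg'h : forall p, g' p = hP p).
  { apply Uh; auto.
    - intros y. refine (Ugu (fun y => g' (i y)) _ _ y).
      + apply mono_comp; auto.
      + intros c' y'. rewrite Eg'. apply (E1 (c', y')).
    - intros z. refine (Ugv (fun z => g' (j z)) _ _ z).
      + apply mono_comp; auto.
      + intros c' z'. rewrite Eg'. apply (E2 (c', z')). }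
  rewrite <- Eg'. unfold prod_map; simpl. rewrite Hg'h. reflexivity.
Qed.
Inductive P5 := pl1 | pl2 | pr | pm2 | prr.

Definition Prel (comm : bool) (l : list P5) (x : P5) : Prop :=
  l = [x] \/ (x = pr /\ Rc comm l [pl1; pl2]) \/ (x = prr /\ Rc comm l [pr; pm2])
  \/ (x = prr /\ Rc comm l [pl1; pl2; pm2]).

Definition Pstr comm : bstr := BStr P5 (Prel comm).

Lemma Prel_min comm x (b : list P5) : (x = pl1 \/ x = pl2 \/ x = pm2) -> @brel (Pstr comm) b x -> b = [x].
Proof.
  intros Hx [H|[[H _]|[[H _]|[H _]]]]; auto; subst;
  destruct Hx as [Hx|[Hx|Hx]]; discriminate.
Qed.

Lemma P_bp comm : is_bposet comm (Pstr comm).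
Proof.
  split; [|split; [|split]].
  - intros a; left; reflexivity.
  - intros as_ a bs H HF. destruct H as [->|[[-> Hr]|[[-> Hr]|[-> Hr]]]].
    + destruct (concat_single _ _ HF) as [b [-> Hb]]; exact Hb.
    + rewrite (concat_min _ _ HF). right; left; auto.
      intros x Hx b Hb. apply (Prel_min comm); auto.
      pose proof (Rc_in comm _ _ _ Hr Hx) as Hin. simpl in Hin. intuition.
    + destruct comm.
      * apply Permutation_sym, Permutation_length_2_inv in Hr.
        destruct Hr as [->| ->];
        inversion HF as [|b1 a1 bs1 l1 Hb1 HF1]; subst;
        inversion HF1 as [|b2 a2 bs2 l2 Hb2 HF2]; subst;
        inversion HF2; subst; simpl; rewrite app_nil_r.
        -- rewrite (Prel_min _ _ _ (or_intror (or_intror eq_refl)) Hb2).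
           destruct Hb1 as [->|[[_ H]|[[H _]|[H _]]]]; try discriminate.
           ++ right; right; left; split; [reflexivity|apply Permutation_refl].
           ++ right; right; right; split; [reflexivity|]. simpl.
              exact (Permutation_app_tail [pm2] H).
        -- rewrite (Prel_min _ _ _ (or_intror (or_intror eq_refl)) Hb1). simpl.
           destruct Hb2 as [->|[[_ H]|[[H _]|[H _]]]]; try discriminate.
           ++ right; right; left; split; [reflexivity|apply perm_swap].
           ++ right; right; right; split; [reflexivity|].
              eapply Permutation_trans; [apply Permutation_cons_append|].
              exact (Permutation_app_tail [pm2] H).
      * subst.
        inversion HF as [|b1 a1 bs1 l1 Hb1 HF1]; subst;
        inversion HF1 as [|b2 a2 bs2 l2 Hb2 HF2]; subst;
        inversion HF2; subst; simpl; rewrite app_nil_r.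
        rewrite (Prel_min _ _ _ (or_intror (or_intror eq_refl)) Hb2).
        destruct Hb1 as [->|[[_ H]|[[H _]|[H _]]]]; try discriminate.
        -- right; right; left; split; reflexivity.
        -- subst. right; right; right; split; reflexivity.
    + rewrite (concat_min _ _ HF). right; right; right; auto.
      intros x Hx b Hb. apply (Prel_min comm); auto.
      pose proof (Rc_in comm _ _ _ Hr Hx) as Hin. simpl in Hin. intuition.
  - intros a b H1 H2.
    destruct H1 as [H1|[[_ H1]|[[_ H1]|[_ H1]]]];
      [injection H1; auto| | |]; apply Rc_length in H1; discriminate.
  - intros Hc l l' a Hp H. subst comm.
    destruct H as [->|[[-> Hr]|[[-> Hr]|[-> Hr]]]].
    + left. apply Permutation_length_1_inv, Hp.
    + right; left; split; auto. eapply Permutation_trans; [apply Permutation_sym, Hp|exact Hr].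
    + right; right; left; split; auto. eapply Permutation_trans; [apply Permutation_sym, Hp|exact Hr].
    + right; right; right; split; auto. eapply Permutation_trans; [apply Permutation_sym, Hp|exact Hr].
Qed.
Lemma fin2 (k : Fin.t 2) : k = Fin.F1 \/ k = Fin.FS Fin.F1.
Proof.
  pattern k; apply Fin.caseS'; [left; reflexivity|].
  intro p. pattern p; apply Fin.caseS'; [right; reflexivity|].
  intro q. apply Fin.case0. exact q.
Qed.

Definition Xb comm : bposet comm := BPos comm (disc unit) (disc_bp comm unit).
Definition Yb comm : bposet comm := BPos comm (corolla comm 2) (corolla_bp comm 2).
Definition Pb comm : bposet comm := BPos comm (Pstr comm) (P_bp comm).

Definition f0 (_ : unit) : option (Fin.t 2) := None.
Definition g0 (_ : unit) : option (Fin.t 2) := Some Fin.F1.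
Definition iY (y : option (Fin.t 2)) : P5 :=
  match y with None => pr | Some k => if Nat.eqb (proj1_sig (Fin.to_nat k)) 0 then pl1 else pl2 end.
Definition jZ (z : option (Fin.t 2)) : P5 :=
  match z with None => prr | Some k => if Nat.eqb (proj1_sig (Fin.to_nat k)) 0 then pr else pm2 end.

Lemma pushout_ok comm :
  is_pushout comm (Xb comm) (Yb comm) (Yb comm) (Pb comm) f0 g0 iY jZ.
Proof.
  split; [apply (mono_disc comm unit (Yb comm))|].
  split; [apply (mono_disc comm unit (Yb comm))|].
  split.
  { intros l y [->|[-> Hr]]; [left; reflexivity|].
    right; left; split; [reflexivity|].
    apply (Rc_map comm iY) in Hr. exact Hr. }
  split.
  { intros l y [->|[-> Hr]]; [left; reflexivity|].
    right; right; left; split; [reflexivity|].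
    apply (Rc_map comm jZ) in Hr. exact Hr. }
  split; [intros x; reflexivity|].
  intros Q u v Hu Hv Huv.
  destruct (bp_ax _ Q) as [rQ [tQ _]].
  assert (Hc : u None = v (Some Fin.F1)) by exact (Huv tt).
  assert (HuL : brel [u (Some Fin.F1); u (Some (Fin.FS Fin.F1))] (u None)).
  { apply (Hu (corolla_leaves 2) None). right; split; [reflexivity|apply Rc_refl]. }
  assert (HvL : brel [v (Some Fin.F1); v (Some (Fin.FS Fin.F1))] (v None)).
  { apply (Hv (corolla_leaves 2) None). right; split; [reflexivity|apply Rc_refl]. }
  set (h := fun p : P5 => match p with
                          | pl1 => u (Some Fin.F1) | pl2 => u (Some (Fin.FS Fin.F1))
                          | pr => u None | pm2 => v (Some (Fin.FS Fin.F1)) | prr => v None end).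
  exists h. split; [|split; [|split]].
  - intros l x H. destruct H as [->|[[-> Hr]|[[-> Hr]|[-> Hr]]]].
    + apply rQ.
    + apply (Rc_tr comm Q _ (map h [pl1; pl2])); [apply Rc_map, Hr|exact HuL].
    + apply (Rc_tr comm Q _ (map h [pr; pm2])); [apply Rc_map, Hr|].
      simpl. rewrite Hc. exact HvL.
    + apply (Rc_tr comm Q _ (map h [pl1; pl2; pm2])); [apply Rc_map, Hr|].
      apply (tQ _ _ [[u (Some Fin.F1); u (Some (Fin.FS Fin.F1))]; [v (Some (Fin.FS Fin.F1))]] HvL).
      constructor; [rewrite <- Hc; exact HuL|].
      constructor; [apply rQ|constructor].
  - intros [k|]; [destruct (fin2 k) as [->| ->]|]; reflexivity.
  - intros [k|]; [destruct (fin2 k) as [->| ->]|]; try reflexivity. exact Hc.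
  - intros h' _ H1 H2 p. destruct p.
    + exact (H1 (Some Fin.F1)).
    + exact (H1 (Some (Fin.FS Fin.F1))).
    + exact (H1 None).
    + exact (H2 (Some (Fin.FS Fin.F1))).
    + exact (H2 None).
Qed.

Lemma prod_single comm (L : list (option (Fin.t 3) * option (Fin.t 2))) p :
  @brel (prod_bstr (corolla comm 3) (corolla comm 2)) L p -> L = [p].
Proof.
  intros [H1 H2].
  destruct H1 as [H1|[_ H1]]; destruct H2 as [H2|[_ H2]].
  - destruct L as [|q [|q' L]]; simpl in H1; try discriminate.
    injection H1 as E1. injection H2 as E2. destruct q, p; simpl in *; subst; reflexivity.
  - apply (f_equal (@length _)) in H1. apply Rc_length in H2.
    rewrite length_map in *. simpl in *. congruence.
  - apply (f_equal (@length _)) in H2. apply Rc_length in H1.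
    rewrite length_map in *. simpl in *. congruence.
  - apply Rc_length in H1. apply Rc_length in H2.
    rewrite length_map in *. simpl in *. congruence.
Qed.

Definition C3 comm := corolla comm 3.

Lemma not_pushout comm :
  ~ is_pushout comm (prod_bstr (C3 comm) (Xb comm)) (prod_bstr (C3 comm) (Yb comm))
      (prod_bstr (C3 comm) (Yb comm)) (prod_bstr (C3 comm) (Pb comm))
      (prod_map f0) (prod_map g0) (prod_map iY) (prod_map jZ).
Proof.
  intros [_ [_ [_ [_ [_ Hu]]]]].
  set (Q := BPos comm (disc (option (Fin.t 3) * P5)) (disc_bp comm _)).
  assert (M1 : @monotone (prod_bstr (C3 comm) (Yb comm)) Q (prod_map iY)).
  { intros l p H. apply prod_single in H. subst. reflexivity. }
  assert (M2 : @monotone (prod_bstr (C3 comm) (Yb comm)) Q (prod_map jZ)).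
  { intros l p H. apply prod_single in H. subst. reflexivity. }
  destruct (Hu Q (prod_map iY) (prod_map jZ) M1 M2) as [h [Hh _]].
  { intros [c x]; reflexivity. }
  assert (HL : @brel (prod_bstr (C3 comm) (Pb comm))
             [(Some Fin.F1, pl1); (Some (Fin.FS Fin.F1), pl2); (Some (Fin.FS (Fin.FS Fin.F1)), pm2)]
             (None, prr)).
  { split.
    - right; split; [reflexivity|]. apply Rc_refl.
    - right; right; right; split; [reflexivity|apply Rc_refl]. }
  specialize (Hh _ _ HL). simpl in Hh. inversion Hh.
Qed.

Theorem proposition3p2 :
  forall comm : bool,
    (* finite products *)
    (forall A B : bposet comm, is_product_in_bPos comm A B) /\
    is_terminal_in_bPos comm /\
    (* C := gamma_3 is a broad poset, C x - does not preserve pushouts ... *)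
    is_bposet comm (corolla comm 3) /\
    (exists (X Y Z P : bposet comm) (f : X -> Y) (g : X -> Z) (i : Y -> P) (j : Z -> P),
        is_pushout comm X Y Z P f g i j /\
        ~ is_pushout comm (prod_bstr (corolla comm 3) X) (prod_bstr (corolla comm 3) Y)
                          (prod_bstr (corolla comm 3) Z) (prod_bstr (corolla comm 3) P)
                          (prod_map f) (prod_map g) (prod_map i) (prod_map j)) /\
    (* ... hence has no right adjoint *)
    ~ has_right_adjoint comm (corolla comm 3).
Proof.
  intros comm.
  split; [apply prod_univ|].
  split; [apply term_ok|].
  split; [apply corolla_bp|].
  split.
  - exists (Xb comm), (Yb comm), (Yb comm), (Pb comm), f0, g0, iY, jZ.
    split; [apply pushout_ok|apply not_pushout].
  - intros Hadj. apply (not_pushout comm).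
    apply (adj_pushout comm (corolla comm 3) (Xb comm) (Yb comm) (Yb comm) (Pb comm));
      [exact Hadj|apply pushout_ok].
Qed.
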